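(* Let $p,q,r\in\mathbb{N}$ with $p,r>1$, and let $T$ be a group of finite exponent $t\in\mathbb{N}$ (i.e. $g^t=1$ for all $g\in T$). For every labelling $\lambda\colon S(p,q,r)\to T$ there exist a labelling $\mu\colon S(tp,q,tr)\to T$ and a digraph epimorphism $\phi\colon\mathbb{S}(tp,q,tr)\to\mathbb{S}(p,q,r)$ such that $\mu(x)^{-1}\mu(y)=\lambda(\phi(y))$ for every edge $(x,y)$ of $\mathbb{S}(tp,q,tr)$. Moreover, for any $x_0\in S(tp,q,tr)$ and any $\alpha\in T$, $\mu$ can be chosen with $\mu(x_0)=\alpha$.
   Context: For $p,q,r\in\mathbb{N}$ with $p,r>1$, the spiral digraph $\mathbb{S}(p,q,r)=(S(p,q,r);s)$ has $p+q+r-2$ vertices $S(p,q,r)=\{a_1,\dots,a_p\}\cup\{b_1,\dots,b_q\}\cup\{c_1,\dots,c_r\}$ where $a_p=b_1$ and $b_q=c_1$ (and otherwise all distinct), and edge set $s=\{(a_i,a_{i+1}):i\in[p-1]\}\cup\{(b_i,b_{i+1}):i\in[q-1]\}\cup\{(c_i,c_{i+1}):i\in[r-1]\}\cup\{(a_p,a_1),(c_r,c_1)\}$. A digraph epimorphism $\phi\colon(B;s^B)\to(A;s^A)$ is a surjection $B\to A$ with $\{(\phi(x),\phi(y)):(x,y)\in s^B\}=s^A$. *)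

(* Defs.v *)
From mathcomp Require Import all_boot.
Set Implicit Arguments. Unset Strict Implicit. Unset Printing Implicit Defensive.

Record GroupOn (T : Type) := {
  gmul : T -> T -> T;
  ginv : T -> T;
  gone : T;
  gmulA : forall x y z, gmul x (gmul y z) = gmul (gmul x y) z;
  gmul1g : forall x, gmul gone x = x;
  gmulVg : forall x, gmul (ginv x) x = gone
}.

Fixpoint gpow (T : Type) (G : GroupOn T) (n : nat) (g : T) : T :=
  match n with 0 => gone G | n'.+1 => gmul G g (gpow G n' g) end.

(* Its p+q+r-2 vertices are encoded as the
   ordinals 'I_(p+q+r-2) via
     a_i |-> i-1          (1 <= i <= p)
     b_j |-> p+j-2        (1 <= j <= q)   (so b_1 = a_p)
     c_k |-> p+q+k-3      (1 <= k <= r)   (so c_1 = b_q)             *)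
Definition spiral_vertex (p q r : nat) := 'I_(p + q + r - 2).

Definition sa (p q r i : nat) : nat := i - 1.
Definition sb (p q r j : nat) : nat := p + j - 2.
Definition sc (p q r k : nat) : nat := p + q + k - 3.

Definition spiral_edge (p q r : nat) (x y : spiral_vertex p q r) : Prop :=
  let x := nat_of_ord x in let y := nat_of_ord y in
  (exists i, 1 <= i < p /\ x = sa p q r i /\ y = sa p q r i.+1) \/
  (exists j, 1 <= j < q /\ x = sb p q r j /\ y = sb p q r j.+1) \/
  (exists k, 1 <= k < r /\ x = sc p q r k /\ y = sc p q r k.+1) \/
  (x = sa p q r p /\ y = sa p q r 1) \/
  (x = sc p q r r /\ y = sc p q r 1).

Definition spiral_epi (p' q' r' p q r : nat)
    (phi : spiral_vertex p' q' r' -> spiral_vertex p q r) : Prop :=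
  (forall u, exists x, phi x = u) /\
  (forall x y, spiral_edge x y -> spiral_edge (phi x) (phi y)) /\
  (forall u v, spiral_edge u v ->
     exists x y, spiral_edge x y /\ phi x = u /\ phi y = v).

(* Main.v *)
Require Import Defs.
From mathcomp Require Import all_boot.
From mathcomp Require Import zify.

Section Grp.
Variables (T : Type) (G : GroupOn T).
Local Notation "x *g y" := (gmul G x y) (at level 40, left associativity).
Local Notation "x ^-1" := (ginv G x).
Local Notation one := (gone G).

Lemma gmulgV x : x *g x^-1 = one.
Proof.
have e : (x *g x^-1) *g (x *g x^-1) = x *g x^-1.
  by rewrite -gmulA (gmulA G (ginv G x) x (ginv G x)) gmulVg gmul1g.
rewrite -{1}(gmul1g G (x *g x^-1)) -{1}(gmulVg G (x *g x^-1)) -gmulA e.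
exact: gmulVg.
Qed.

Lemma gmulg1 x : x *g one = x.
Proof. by rewrite -(gmulVg G x) gmulA gmulgV gmul1g. Qed.

Lemma gKV a b : a^-1 *g (a *g b) = b.
Proof. by rewrite gmulA gmulVg gmul1g. Qed.

Lemma gpowSr n g : gpow G n.+1 g = gpow G n g *g g.
Proof.
elim: n => [|n IH] /=; first by rewrite gmulg1 gmul1g.
by rewrite -gmulA -IH.
Qed.

Fixpoint Rp (f : nat -> T) (a n : nat) : T :=
  match n with 0 => one | n'.+1 => Rp f a n' *g f (a + n'.+1) end.

Lemma Rp_add f a n m : Rp f a (n + m) = Rp f a n *g Rp f (a + n) m.
Proof.
elim: m => [|m IH]; first by rewrite addn0 /= gmulg1.
rewrite addnS /= IH -gmulA; do 3 f_equal; lia.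
Qed.

Lemma Rp_ext2 f g a b n : (forall i, 0 < i <= n -> f (a + i) = g (b + i)) ->
  Rp f a n = Rp g b n.
Proof.
elim: n => [|n IH] H //=.
rewrite IH; last by move=> i /andP[h1 h2]; apply: H; rewrite h1 ltnW.
rewrite H //; apply/andP; split => //.
Qed.

Lemma Rp_ext f g a n : (forall i, 0 < i <= n -> f (a + i) = g (a + i)) ->
  Rp f a n = Rp g a n.
Proof. exact: Rp_ext2. Qed.

Lemma Rp_per g a p n : (forall i, g (a + i + p) = g (a + i)) ->
  Rp g a (n * p) = gpow G n (Rp g a p).
Proof.
move=> H.
have Hs : forall k i, g (a + k * p + i) = g (a + i).
  elim=> [|k IH] i; first by rewrite mul0n addn0.
  rewrite mulSnr (_ : a + (k * p + p) + i = a + (k * p + i) + p); last by lia.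
  by rewrite H addnA IH.
elim: n => [|n IH]; first by [].
rewrite mulSnr Rp_add IH gpowSr; congr (_ *g _).
by apply: Rp_ext2 => i _; rewrite Hs.
Qed.

End Grp.

Lemma edgeE p q r (hp : 1 < p) (hq : 0 < q) (hr : 1 < r) (x y : spiral_vertex p q r) :
  spiral_edge x y <-> ((nat_of_ord y = (nat_of_ord x).+1) \/
     (nat_of_ord x = p - 1 /\ nat_of_ord y = 0) \/
     (nat_of_ord x = p + q + r - 3 /\ nat_of_ord y = p + q - 2)).
Proof.
have := ltn_ord x; have := ltn_ord y.
rewrite /spiral_edge /sa /sb /sc /=.
move: (nat_of_ord x) (nat_of_ord y) => a b ha hb.
split.
  case=> [[i [h1 [-> ->]]]|[[j [h1 [-> ->]]]|[[k [h1 [-> ->]]]|[[-> ->]|[-> ->]]]]]; lia.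
case=> [E|[[E1 E2]|[E1 E2]]].
- case: (ltnP a.+1 p) => h1.
    by left; exists a.+1; lia.
  case: (ltnP a (p + q - 2)) => h2.
    by right; left; exists (a + 2 - p); lia.
  by right; right; left; exists (a + 3 - p - q); lia.
- by right; right; right; left; lia.
- by right; right; right; right; lia.
Qed.

Lemma modS x p : 0 < p -> x.+1 %% p = (x %% p).+1 \/ (x %% p = p - 1 /\ x.+1 %% p = 0).
Proof.
move=> hp.
have e := divn_eq x p.
have hl := ltn_mod x p.
rewrite hp in hl.
have -> : x.+1 = x %/ p * p + (x %% p).+1 by lia.
rewrite modnMDl.
case: (ltnP (x %% p).+1 p) => h.
  by left; rewrite modn_small.
right; have E : (x %% p).+1 = p by lia.
by rewrite E modnn; lia.
Qed.

Definition phin (p q r P x : nat) : nat :=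
  if x < p + P - 1 then x %% p
  else if x <= p + P + q - 2 then x - P
  else (p + q - 2) + (x - (p + P + q - 2)) %% r.

Lemma core (p q r P Rr : nat) (hp : 1 < p) (hq : 0 < q) (hr : 1 < r)
  (T : Type) (G : GroupOn T)
  (hPm : forall k, (P + k) %% p = k %% p)
  (hRm : forall k, (Rr + k) %% r = k %% r)
  (hPer : forall (g : nat -> T) a, (forall i, g (a + i + p) = g (a + i)) ->
      Rp T G g a (p + P) = gone G)
  (hRper : forall (g : nat -> T) a, (forall i, g (a + i + r) = g (a + i)) ->
      Rp T G g a (r + Rr) = gone G)
  (lambda : spiral_vertex p q r -> T)
  (x0 : spiral_vertex (p + P) q (r + Rr)) (alpha : T) :
  exists (mu : spiral_vertex (p + P) q (r + Rr) -> T)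
         (phi : spiral_vertex (p + P) q (r + Rr) -> spiral_vertex p q r),
    spiral_epi phi /\
    (forall x y, spiral_edge x y -> gmul G (ginv G (mu x)) (mu y) = lambda (phi y)) /\
    mu x0 = alpha.
Proof.
have hp0 : 0 < p by lia.
have hr0 : 0 < r by lia.
have F1 : forall u, u < p + q + r - 2 -> phin p q r P (u + P) = u.
  move=> u hu; rewrite /phin.
  case: ifP => h1.
    by rewrite addnC hPm modn_small //; lia.
  case: ifP => h2; first by lia.
  rewrite modn_small; lia.
have F2 : phin p q r P (p + P - 1) = p - 1.
  have h := F1 (p - 1) ltac:(lia).
  by rewrite (_ : p + P - 1 = p - 1 + P) ?h //; lia.
have F3 : phin p q r P 0 = 0.
  by rewrite /phin ifT ?mod0n //; lia.
have F4 : phin p q r P (p + P + q - 2) = p + q - 2.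
  have h := F1 (p + q - 2) ltac:(lia).
  by rewrite (_ : p + P + q - 2 = p + q - 2 + P) ?h //; lia.
have F5 : phin p q r P (p + P + q + (r + Rr) - 2 - 1) = p + q + r - 2 - 1.
  rewrite /phin ifF; last by lia.
  rewrite ifF; last by lia.
  have -> : p + P + q + (r + Rr) - 2 - 1 - (p + P + q - 2) = Rr + (r - 1) by lia.
  rewrite hRm modn_small; lia.
have F6 : forall x, x.+1 < p + P + q + (r + Rr) - 2 ->
   let a := phin p q r P x in let b := phin p q r P x.+1 in
   (b = a.+1 \/ (a = p - 1 /\ b = 0) \/ (a = p + q + r - 3 /\ b = p + q - 2)).
  move=> x hx /=.
  case: (ltnP x.+1 (p + P - 1)) => h1.
    rewrite /phin ifT; last by lia.
    rewrite ifT; last by lia.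
    case: (@modS x p hp0) => [->|[-> ->]]; [by left | by right; left].
  case: (ltnP x.+1 (p + P)) => h2.
    have -> : x.+1 = p + P - 1 by lia.
    rewrite F2; left.
    rewrite /phin ifT; last by lia.
    have -> : x = P + (p - 2) by lia.
    rewrite hPm modn_small; lia.
  case: (ltnP x.+1 (p + P + q - 1)) => h3.
    left; rewrite /phin ifF; last by lia.
    rewrite ifT; last by lia.
    rewrite ifF; last by lia.
    rewrite ifT; lia.
  case: (ltnP x (p + P + q - 1)) => h4.
    have ex : x = p + P + q - 2 by lia.
    rewrite ex F4; left.
    rewrite /phin ifF; last by lia.
    rewrite ifF; last by lia.
    have -> : (p + P + q - 2).+1 - (p + P + q - 2) = 1 by lia.
    rewrite modn_small; lia.
  rewrite /phin ifF; last by lia.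
  rewrite ifF; last by lia.
  rewrite ifF; last by lia.
  rewrite ifF; last by lia.
  have -> : x.+1 - (p + P + q - 2) = (x - (p + P + q - 2)).+1 by lia.
  case: (@modS (x - (p + P + q - 2)) r hr0) => [->|[-> ->]].
    by left; lia.
  by right; right; lia.
have Flt : forall x, x < p + P + q + (r + Rr) - 2 -> phin p q r P x < p + q + r - 2.
  move=> x hx; rewrite /phin.
  case: ifP => h1.
    have := ltn_mod x p; rewrite hp0; lia.
  case: ifP => h2; first by lia.
  have := ltn_mod (x - (p + P + q - 2)) r; rewrite hr0; lia.
pose phi (x : spiral_vertex (p + P) q (r + Rr)) : spiral_vertex p q r :=
  Ordinal (Flt _ (ltn_ord x)).
pose Ln (k : nat) : T := oapp lambda (gone G) (insub k).
have LnE : forall o : spiral_vertex p q r, Ln (nat_of_ord o) = lambda o.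
  by move=> o; rewrite /Ln valK.
pose F k := Ln (phin p q r P k).
pose Q n := Rp T G F 0 n.
have K1 : gmul G (Q (p + P - 1)) (Ln 0) = gone G.
  have -> : Q (p + P - 1) = Rp T G (fun k => Ln (k %% p)) 0 (p + P - 1).
    apply: Rp_ext => i /andP[i1 i2].
    rewrite /F; congr Ln.
    case: (ltnP i (p + P - 1)) => h.
      by rewrite /phin ifT.
    have -> : 0 + i = p + P - 1 by lia.
    rewrite F2.
    have -> : p + P - 1 = P + (p - 1) by lia.
    rewrite hPm modn_small; lia.
  have -> : Ln 0 = (fun k => Ln (k %% p)) (0 + (p + P - 1).+1).
    have -> : 0 + (p + P - 1).+1 = P + p by lia.
    by rewrite hPm modnn.
  have <- : Rp T G (fun k => Ln (k %% p)) 0 (p + P - 1).+1 =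
     gmul G (Rp T G (fun k => Ln (k %% p)) 0 (p + P - 1))
       (Ln ((0 + (p + P - 1).+1) %% p)) by [].
  have -> : (p + P - 1).+1 = p + P by lia.
  apply: hPer => i.
  by rewrite modnDr.
pose B' := p + P + q - 2.
pose N' := p + P + q + (r + Rr) - 2.
have K2 : gmul G (Rp T G F B' (N' - 1 - B')) (Ln (phin p q r P B')) = gone G.
  pose h k := Ln ((p + q - 2) + (k - B') %% r).
  have -> : Rp T G F B' (N' - 1 - B') = Rp T G h B' (N' - 1 - B').
    apply: Rp_ext => i /andP[i1 i2].
    rewrite /F /h /phin /B' /N' in i2 *.
    rewrite ifF; last by lia.
    rewrite ifF; last by lia.
    by [].
  have -> : Ln (phin p q r P B') = h (B' + (N' - 1 - B').+1).
    rewrite /h /B' F4.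
    have -> : p + P + q - 2 + (N' - 1 - (p + P + q - 2)).+1 - (p + P + q - 2)
      = Rr + r by rewrite /N'; lia.
    by rewrite hRm modnn addn0.
  have <- : Rp T G h B' (N' - 1 - B').+1 =
     gmul G (Rp T G h B' (N' - 1 - B')) (h (B' + (N' - 1 - B').+1)) by [].
  have -> : (N' - 1 - B').+1 = r + Rr by rewrite /N' /B'; lia.
  apply: hRper => i.
  rewrite /h.
  have -> : B' + i + r - B' = i + r by lia.
  have -> : B' + i - B' = i by lia.
  by rewrite modnDr.
pose c := gmul G alpha (ginv G (Q x0)).
exists (fun x => gmul G c (Q x)), phi.
split; [|split].
- split; [|split].
  + move=> u.
    have hu : u + P < p + P + q + (r + Rr) - 2 by have := ltn_ord u; lia.
    exists (Ordinal hu); apply: val_inj => /=.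
    by apply: F1; exact: ltn_ord.
  + move=> x y /(@edgeE (p + P) q (r + Rr) ltac:(lia) hq ltac:(lia) _ _) E'; apply/(@edgeE p q r hp hq hr _ _).
    have hx := ltn_ord x; have hy := ltn_ord y.
    rewrite /= /phi /=.
    case: E' => [Ey|[[Ex Ey]|[Ex Ey]]].
    * rewrite Ey; apply: F6; lia.
    * rewrite Ex Ey F3; right; left; split => //.
    * rewrite Ex Ey.
      have -> : p + P + q + (r + Rr) - 3 = p + P + q + (r + Rr) - 2 - 1 by lia.
      rewrite F5 F4; right; right; split => //; lia.
  + move=> u v /(@edgeE p q r hp hq hr _ _) E.
    have hu := ltn_ord u; have hv := ltn_ord v.
    case: E => [Ev|[[Eu Ev]|[Eu Ev]]].
    * have h1 : u + P < p + P + q + (r + Rr) - 2 by lia.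
      have h2 : v + P < p + P + q + (r + Rr) - 2 by lia.
      exists (Ordinal h1), (Ordinal h2); split; last split.
      -- apply/(@edgeE (p + P) q (r + Rr) ltac:(lia) hq ltac:(lia) _ _) => /=; left; lia.
      -- by apply: val_inj => /=; apply: F1.
      -- by apply: val_inj => /=; apply: F1.
    * have h1 : p + P - 1 < p + P + q + (r + Rr) - 2 by lia.
      have h2 : 0 < p + P + q + (r + Rr) - 2 by lia.
      exists (Ordinal h1), (Ordinal h2); split; last split.
      -- apply/(@edgeE (p + P) q (r + Rr) ltac:(lia) hq ltac:(lia) _ _) => /=; right; left; lia.
      -- by apply: val_inj => /=; rewrite F2 Eu.
      -- by apply: val_inj => /=; rewrite F3 Ev.
    * have h1 : p + P + q + (r + Rr) - 2 - 1 < p + P + q + (r + Rr) - 2 by lia.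
      have h2 : p + P + q - 2 < p + P + q + (r + Rr) - 2 by lia.
      exists (Ordinal h1), (Ordinal h2); split; last split.
      -- apply/(@edgeE (p + P) q (r + Rr) ltac:(lia) hq ltac:(lia) _ _) => /=; right; right; lia.
      -- by apply: val_inj => /=; rewrite F5 Eu; lia.
      -- by apply: val_inj => /=; rewrite F4 Ev.
- move=> x y /(@edgeE (p + P) q (r + Rr) ltac:(lia) hq ltac:(lia) _ _) E.
  have hx := ltn_ord x; have hy := ltn_ord y.
  have Ly : lambda (phi y) = F y by rewrite /F -LnE.
  rewrite Ly.
  case: E => [Ey|[[Ex Ey]|[Ex Ey]]].
  + rewrite /Q Ey /= add0n (gmulA G c) gKV.
    by [].
  + rewrite /Q Ex Ey /= gmulg1 /F F3.
    rewrite -{2}(@gmulg1 T G c) -K1 (gmulA G c).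
    by rewrite gKV.
  + rewrite /F Ey.
    have -> : Q x = gmul G (Q B') (Rp T G F B' (N' - 1 - B')).
      rewrite /Q -Rp_add Ex; congr (Rp _ _ _ _); rewrite /B' /N'; lia.
    rewrite -/B'.
    have e : gmul G c (Q B') = gmul G (gmul G c (gmul G (Q B') (Rp T G F B' (N' - 1 - B'))))
        (Ln (phin p q r P B')).
      by rewrite -gmulA -gmulA K2 gmulg1.
    by rewrite e gKV.
- by rewrite /c -gmulA gmulVg gmulg1.
Qed.

Theorem lemma4p1 (p q r : nat) (hp : 1 < p) (hq : 0 < q) (hr : 1 < r)
  (T : Type) (G : GroupOn T) (t : nat) (ht : 0 < t)
  (hexp : forall g : T, gpow G t g = gone G)
  (lambda : spiral_vertex p q r -> T)
  (x0 : spiral_vertex (t * p) q (t * r)) (alpha : T) :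
  exists (mu : spiral_vertex (t * p) q (t * r) -> T)
         (phi : spiral_vertex (t * p) q (t * r) -> spiral_vertex p q r),
    spiral_epi phi /\
    (forall x y, spiral_edge x y -> gmul G (ginv G (mu x)) (mu y) = lambda (phi y)) /\
    mu x0 = alpha.
Proof.
case: t ht hexp x0 => // m _ hexp x0.
apply: (@core p q r (m * p) (m * r) hp hq hr T G).
- by move=> k; rewrite modnMDl.
- by move=> k; rewrite modnMDl.
- move=> g a H; rewrite -mulSn Rp_per //.
- move=> g a H; rewrite -mulSn Rp_per //.
Qed.
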